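(* Fix $d\ge1$, $N\ge1$, $\alpha\ge2$, powers $P_s,P_r>0$, gains $\xi_{u,v}>0$, and positions $\mathbf{s},\mathbf{1},\dots,\mathbf{N}\in\mathbb{R}^d$ of the source and destinations with $\mathbf{s}\neq\mathbf{j}$ for all $j$. For a relay position $\mathbf{r}\in\mathbb{R}^d$ let $\mathsf{SNR}_{u,v}=\xi_{u,v}P_u/\|\mathbf{u}-\mathbf{v}\|^{\alpha}$ for $(u,v)\in\{(s,r),(s,j),(r,j)\}$ (an SNR being $+\infty$ when the corresponding distance is $0$), and for $\rho\in[0,1]$, $j=1,\dots,N$, define $$f_j(\rho,\mathbf{r})=\mathsf{SNR}_{s,j}+\mathsf{SNR}_{r,j}+2\rho\sqrt{\mathsf{SNR}_{s,j}\mathsf{SNR}_{r,j}},\qquad g_j(\rho,\mathbf{r})=(1-\rho^2)(\mathsf{SNR}_{s,j}+\mathsf{SNR}_{s,r}).$$ Then for every fixed $\rho\in[0,1]$, $f_j(\rho,\cdot)$ and $g_j(\rho,\cdot)$ are quasi-concave in $\mathbf{r}\in\mathbb{R}^d$. Furthermore, $(t,\mathbf{r})\mapsto f_j(\sqrt t,\mathbf{r})$ is quasi-concave on $[0,1]\times\mathbb{R}^d$ (i.e., $f_j$ is quasi-concave in $(\rho^2,\mathbf{r})$).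
   Context: Setting: real AWGN multicast relay channel with source $s$, relay $r$ at position $\mathbf{r}$, destinations $1,\dots,N$, path-loss exponent $\alpha$ and channel gain $a_{u,v}=\sqrt{\xi_{u,v}}/\|\mathbf{u}-\mathbf{v}\|^{\alpha/2}$, so $\mathsf{SNR}_{u,v}=a_{u,v}^2P_u$; $\rho$ is the source–relay input correlation coefficient. A function $F$ (possibly taking value $+\infty$) on a convex set is quasi-concave if $F(\lambda x_1+(1-\lambda)x_2)\ge\min(F(x_1),F(x_2))$ for all $x_1,x_2$ and $\lambda\in[0,1]$. *)

(* Defs.v *)
From HB Require Import structures.
From mathcomp Require Import all_boot all_order all_algebra.
From mathcomp Require Import all_classical all_reals.
From mathcomp Require Import exp.
Set Implicit Arguments. Unset Strict Implicit. Unset Printing Implicit Defensive.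
Import Order.TTheory GRing.Theory Num.Theory.
Local Open Scope ring_scope.
Local Open Scope ereal_scope.

Section Defs.
Variable R : realType.
Variable d : nat.

Definition enorm (x : 'rV[R]_d) : R := Num.sqrt (\sum_(i < d) (x ord0 i) ^+ 2)%R.

Definition SNR (xi P alpha : R) (u v : 'rV[R]_d) : \bar R :=
  if enorm (u - v) == 0%R then +oo
  else ((xi * P) / (enorm (u - v) `^ alpha))%:E.

Definition f_fun (xi_sj xi_rj Ps Pr alpha : R) (s pj : 'rV[R]_d)
    (rho : R) (r : 'rV[R]_d) : \bar R :=
  let a := SNR xi_sj Ps alpha s pj in
  let b := SNR xi_rj Pr alpha r pj in
  a + b + (2 * rho)%:E * sqrte (a * b).

Definition g_fun (xi_sj xi_sr Ps alpha : R) (s pj : 'rV[R]_d)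
    (rho : R) (r : 'rV[R]_d) : \bar R :=
  (1 - rho ^+ 2)%:E * (SNR xi_sj Ps alpha s pj + SNR xi_sr Ps alpha s r).

Definition quasiconcave_rV (F : 'rV[R]_d -> \bar R) : Prop :=
  forall (x1 x2 : 'rV[R]_d) (l : R), (0 <= l <= 1)%R ->
    Order.min (F x1) (F x2) <= F (l *: x1 + (1 - l) *: x2)%R.

Definition quasiconcave_joint (F : R -> 'rV[R]_d -> \bar R) : Prop :=
  forall (t1 t2 : R) (x1 x2 : 'rV[R]_d) (l : R),
    (0 <= t1 <= 1)%R -> (0 <= t2 <= 1)%R -> (0 <= l <= 1)%R ->
    Order.min (F t1 x1) (F t2 x2) <= F (l * t1 + (1 - l) * t2)%R (l *: x1 + (1 - l) *: x2)%R.
End Defs.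

(* Main.v *)
Require Import Defs.
From HB Require Import structures.
From mathcomp Require Import all_boot all_order all_algebra.
From mathcomp Require Import all_classical all_reals.
From mathcomp Require Import exp.
From mathcomp Require Import interval_inference convex hoelder.
From mathcomp Require Import ring lra.
Import Order.TTheory GRing.Theory Num.Theory.
Local Open Scope ring_scope.

Section Helpers.
Variable R : realType.

Lemma powconv (e x y l : R) : 1 <= e -> 0 <= x -> 0 <= y -> 0 <= l <= 1 ->
  (l * x + (1 - l) * y) `^ e <= l * x `^ e + (1 - l) * y `^ e.
Proof.
move=> e1 x0 y0 /andP[l0 l1].
have := convex_powR e1 (Itv01 l0 l1) (x:=x) (y:=y).
rewrite !inE /= !in_itv /= !andbT => /(_ x0 y0).
by rewrite !convRE /=.
Qed.

Lemma sqrt_conc (u v l : R) : 0 <= u -> 0 <= v -> 0 <= l <= 1 ->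
  l * Num.sqrt u + (1 - l) * Num.sqrt v <= Num.sqrt (l * u + (1 - l) * v).
Proof.
move=> u0 v0 /andP[l0 l1].
have su := sqrtr_ge0 u; have sv := sqrtr_ge0 v.
have Hu := sqr_sqrtr u0; have Hv := sqr_sqrtr v0.
set a := Num.sqrt u in su Hu *; set b := Num.sqrt v in sv Hv *.
have h0 : 0 <= l * a + (1 - l) * b by nra.
rewrite -(ger0_norm h0) -sqrtr_sqr ler_sqrt; last by nra.
rewrite -Hu -Hv.
have h1 : 0 <= 1 - l by lra.
have := mulr_ge0 (mulr_ge0 l0 h1) (sqr_ge0 (a - b)).
nra.
Qed.

Lemma sq_le (x y : R) : 0 <= y -> x ^+ 2 <= y ^+ 2 -> x <= y.
Proof. move=> y0 h; nra. Qed.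

Lemma core (K c g t1 t2 l q1 q2 q : R) :
  0 < c -> 0 <= g -> 0 <= t1 -> 0 <= t2 -> 0 <= l <= 1 ->
  0 <= q1 -> 0 <= q2 -> 0 <= q -> q <= l * q1 + (1 - l) * q2 ->
  K * q1 ^+ 2 - 2 * (Num.sqrt t1 * g) * q1 - c <= 0 ->
  K * q2 ^+ 2 - 2 * (Num.sqrt t2 * g) * q2 - c <= 0 ->
  K * q ^+ 2 - 2 * (Num.sqrt (l * t1 + (1 - l) * t2) * g) * q - c <= 0.
Proof.
move=> c0 g0 t10 t20 /andP[l0 l1] q10 q20 q0 qle P1 P2.
have lH : 0 <= l <= 1 by apply/andP.
set t := l * t1 + (1 - l) * t2.
have t0 : 0 <= t by rewrite /t; nra.
have st1 := sqrtr_ge0 t1; have st2 := sqrtr_ge0 t2; have st := sqrtr_ge0 t.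
have cs : l * Num.sqrt t1 + (1 - l) * Num.sqrt t2 <= Num.sqrt t by exact: sqrt_conc.
set s1 := Num.sqrt t1 * g; set s2 := Num.sqrt t2 * g; set s := Num.sqrt t * g.
rewrite -/s1 in P1; rewrite -/s2 in P2; rewrite -/s.
have s10 : 0 <= s1 by rewrite /s1 mulr_ge0. 
have s20 : 0 <= s2 by rewrite /s2 mulr_ge0.
have s0 : 0 <= s by rewrite /s mulr_ge0.
have sle : l * s1 + (1 - l) * s2 <= s.
  rewrite /s1 /s2 /s; nra.
have [K0|K0] := lerP K 0.
  have : 0 <= s * q by rewrite mulr_ge0. nra.
set S1 := Num.sqrt (s1 ^+ 2 + K * c); set S2 := Num.sqrt (s2 ^+ 2 + K * c).
set S := Num.sqrt (s ^+ 2 + K * c).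
have KC : 0 <= K * c by nra.
have HS1 : S1 ^+ 2 = s1 ^+ 2 + K * c by rewrite sqr_sqrtr // addr_ge0 // sqr_ge0.
have HS2 : S2 ^+ 2 = s2 ^+ 2 + K * c by rewrite sqr_sqrtr // addr_ge0 // sqr_ge0.
have HS : S ^+ 2 = s ^+ 2 + K * c by rewrite sqr_sqrtr // addr_ge0 // sqr_ge0.
have S10 : 0 <= S1 := sqrtr_ge0 _. have S20 : 0 <= S2 := sqrtr_ge0 _.
have S0 : 0 <= S := sqrtr_ge0 _.
have b1 : K * q1 - s1 <= S1.
  apply: sq_le => //; rewrite HS1.
  have := mulr_ge0_le0 (ltW K0) P1. nra.
have b2 : K * q2 - s2 <= S2.
  apply: sq_le => //; rewrite HS2.
  have := mulr_ge0_le0 (ltW K0) P2. nra.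
have Sle : l * S1 + (1 - l) * S2 <= S.
  rewrite /S1 /S2 /S.
  have -> : s ^+ 2 + K * c = l * (s1 ^+ 2 + K * c) + (1 - l) * (s2 ^+ 2 + K * c).
    rewrite /s /s1 /s2 !exprMn !sqr_sqrtr //. rewrite /t; ring.
  by apply: sqrt_conc => //; rewrite addr_ge0 // sqr_ge0.
have b : K * q - s <= S.
  have h1 : K * q <= K * (l * q1 + (1 - l) * q2) by rewrite ler_pM2l.
  have h2 : l * (K * q1 - s1) <= l * S1 by rewrite ler_wpM2l.
  have h3 : (1 - l) * (K * q2 - s2) <= (1 - l) * S2 by rewrite ler_wpM2l // subr_ge0.
  nra.
have ss : s <= S by apply: sq_le => //; nra.
have b' : (K * q - s) ^+ 2 <= S ^+ 2.
  have h4 : 0 <= K * q by rewrite mulr_ge0 // ltW.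
  nra.
nra.
Qed.
End Helpers.

Section Norm.
Variable R : realType.
Variable d : nat.
Implicit Types (u v : 'I_d -> R).

Lemma sum_expand u v (x y : R) :
  \sum_i (x * u i + y * v i) ^+ 2 =
  x ^+ 2 * (\sum_i u i ^+ 2) + 2 * x * y * (\sum_i u i * v i) + y ^+ 2 * (\sum_i v i ^+ 2).
Proof.
rewrite !mulr_sumr -!big_split /=; apply: eq_bigr => i _; ring.
Qed.

Lemma CS2 u v : (\sum_i u i * v i) ^+ 2 <= (\sum_i u i ^+ 2) * (\sum_i v i ^+ 2).
Proof.
set A := \sum_i u i ^+ 2; set B := \sum_i v i ^+ 2; set C := \sum_i u i * v i.
have ge x y : 0 <= \sum_i (x * u i + y * v i) ^+ 2 by apply: sumr_ge0 => i _; exact: sqr_ge0.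
have B0 : 0 <= B by apply: sumr_ge0 => i _; exact: sqr_ge0.
have [B0'|] := ltrP 0 B.
  have h : 0 <= B * (A * B - C ^+ 2).
    have := ge B (- C); rewrite sum_expand -/A -/B -/C.
    suff -> : B ^+ 2 * A + 2 * B * - C * C + (- C) ^+ 2 * B = B * (A * B - C ^+ 2) by [].
    ring.
  have := pmulr_rge0 (A * B - C ^+ 2) B0'; rewrite h => /esym.
  by rewrite subr_ge0.
move=> B0''; have -> : B = 0 by apply/eqP; rewrite eq_le B0'' B0.
have [C0|C0] := eqVneq C 0; first by rewrite C0 expr0n /= mulr0.
exfalso.
have := ge 1 (- (A + 1) / (2 * C)); rewrite sum_expand -/A -/B -/C.
have -> : 2 * 1 * (- (A + 1) / (2 * C)) * C = - (A + 1) by field; rewrite C0.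
have -> : B = 0 by apply/eqP; rewrite eq_le B0'' B0.
rewrite mulr0 addr0 expr1n mul1r. lra.
Qed.

Lemma CS u v : \sum_i u i * v i <= Num.sqrt (\sum_i u i ^+ 2) * Num.sqrt (\sum_i v i ^+ 2).
Proof.
have A0 : 0 <= \sum_i u i ^+ 2 by apply: sumr_ge0 => i _; exact: sqr_ge0.
have B0 : 0 <= \sum_i v i ^+ 2 by apply: sumr_ge0 => i _; exact: sqr_ge0.
apply: sq_le; first by rewrite mulr_ge0 // sqrtr_ge0.
by rewrite exprMn !sqr_sqrtr // CS2.
Qed.

Lemma enorm_ge0 (x : 'rV[R]_d) : 0 <= enorm x.
Proof. exact: sqrtr_ge0. Qed.

Lemma enormD (x y : 'rV[R]_d) : enorm (x + y) <= enorm x + enorm y.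
Proof.
rewrite /enorm.
have A0 : 0 <= \sum_i (x ord0 i) ^+ 2 by apply: sumr_ge0 => i _; exact: sqr_ge0.
have B0 : 0 <= \sum_i (y ord0 i) ^+ 2 by apply: sumr_ge0 => i _; exact: sqr_ge0.
have h0 : 0 <= Num.sqrt (\sum_i (x ord0 i) ^+ 2) + Num.sqrt (\sum_i (y ord0 i) ^+ 2).
  by rewrite addr_ge0 // sqrtr_ge0.
rewrite -(ger0_norm h0) -sqrtr_sqr ler_sqrt ?sqr_ge0 //.
have -> : \sum_i ((x + y) ord0 i) ^+ 2 = \sum_i (1 * x ord0 i + 1 * y ord0 i) ^+ 2.
  by apply: eq_bigr => i _; rewrite !mxE !mul1r.
rewrite sum_expand.
have := CS (fun i => x ord0 i) (fun i => y ord0 i).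
have ha := sqr_sqrtr A0; have hb := sqr_sqrtr B0.
set a := Num.sqrt _ in ha *; set b := Num.sqrt _ in hb *.
move=> h; rewrite -ha -hb. nra.
Qed.

Lemma enormZ (k : R) (x : 'rV[R]_d) : enorm (k *: x) = `|k| * enorm x.
Proof.
rewrite /enorm.
have -> : \sum_i ((k *: x) ord0 i) ^+ 2 = k ^+ 2 * \sum_i (x ord0 i) ^+ 2.
  by rewrite mulr_sumr; apply: eq_bigr => i _; rewrite !mxE exprMn.
by rewrite sqrtrM ?sqr_ge0 // sqrtr_sqr.
Qed.

Lemma enorm_eq0 (x : 'rV[R]_d) : enorm x = 0 -> x = 0.
Proof.
rewrite /enorm => /eqP; rewrite sqrtr_eq0 => h.
have h0 : \sum_i (x ord0 i) ^+ 2 = 0.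
  apply/eqP; rewrite eq_le h; apply: sumr_ge0 => i _; exact: sqr_ge0.
apply/matrixP => i j; rewrite (ord1 i) mxE.
have := psumr_eq0P (fun i _ => sqr_ge0 (x ord0 i)) h0 (i := j) isT.
by move/eqP; rewrite sqrf_eq0 => /eqP.
Qed.

Lemma enorm_conv (x1 x2 p : 'rV[R]_d) (l : R) : 0 <= l <= 1 ->
  enorm (l *: x1 + (1 - l) *: x2 - p) <= l * enorm (x1 - p) + (1 - l) * enorm (x2 - p).
Proof.
move=> /andP[l0 l1].
have -> : l *: x1 + (1 - l) *: x2 - p = l *: (x1 - p) + (1 - l) *: (x2 - p).
  by rewrite !scalerBr scalerBl scale1r; apply/rowP => i; rewrite !mxE; ring.
apply: le_trans (enormD _ _) _.
by rewrite !enormZ !ger0_norm // subr_ge0.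
Qed.

Lemma enorm_conv' (x1 x2 p : 'rV[R]_d) (l : R) : 0 <= l <= 1 ->
  enorm (p - (l *: x1 + (1 - l) *: x2)) <= l * enorm (p - x1) + (1 - l) * enorm (p - x2).
Proof.
move=> hl.
have e (u w : 'rV[R]_d) : enorm (u - w) = enorm (w - u).
  by rewrite -opprB -scaleN1r enormZ normrN normr1 mul1r.
rewrite (e p (_ + _)) (e p x1) (e p x2); exact: enorm_conv.
Qed.
End Norm.

Section Fpart.
Variable R : realType.
Variable d : nat.
Local Open Scope ereal_scope.

Lemma ge0_nNy (z : \bar R) : 0 <= z -> z != -oo.
Proof. by case: z. Qed.

Lemma SNR_nNy (xi P alpha : R) (u v : 'rV[R]_d) : SNR xi P alpha u v != -oo.
Proof. by rewrite /SNR; case: ifP. Qed.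

Variables (xs xr Ps Pr alpha : R) (s p : 'rV[R]_d).
Hypotheses (xs0 : (0 < xs)%R) (xr0 : (0 < xr)%R) (Ps0 : (0 < Ps)%R) (Pr0 : (0 < Pr)%R)
  (al2 : (2 <= alpha)%R) (sp : s != p).

Let F t x := f_fun xs xr Ps Pr alpha s p (Num.sqrt t) x.

Lemma F_inf t x : enorm (x - p) = 0%R -> F t x = +oo.
Proof.
move=> h; rewrite /F /f_fun /SNR h eqxx.
rewrite addey; last exact: SNR_nNy.
rewrite addye //; apply: ge0_nNy; apply: mule_ge0; last exact: sqrte_ge0.
by rewrite lee_fin mulr_ge0 // sqrtr_ge0.
Qed.

Let Ds := enorm (s - p).
Lemma Ds_gt0 : (0 < Ds)%R.
Proof.
rewrite lt_neqAle enorm_ge0 andbT; apply/eqP => /esym /enorm_eq0 /eqP.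
by rewrite subr_eq0 (negbTE sp).
Qed.

Let a := (xs * Ps / Ds `^ alpha)%R.
Let c := (xr * Pr)%R.
Let e := (alpha / 2)%R.
Let g := Num.sqrt (a * c).
Let qq x := (enorm (x - p) `^ e)%R.

Lemma a_gt0 : (0 < a)%R.
Proof. by rewrite /a divr_gt0 ?mulr_gt0 // powR_gt0 // Ds_gt0. Qed.

Lemma c_gt0 : (0 < c)%R.
Proof. by rewrite /c mulr_gt0. Qed.

Lemma SNRs : SNR xs Ps alpha s p = a%:E.
Proof. by rewrite /SNR -/Ds gt_eqF ?Ds_gt0. Qed.

Lemma powa (D : R) : (0 <= D)%R -> (D `^ alpha = (D `^ e) ^+ 2)%R.
Proof.
move=> D0; have -> : alpha = (e * 2%:R)%R by rewrite /e; field.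
by rewrite powRrM powR_mulrn // powR_ge0.
Qed.

Definition Fr t x : R :=
  (a + c / qq x ^+ 2 + 2 * Num.sqrt t * (g / qq x))%R.

Lemma F_fin t x : (0 < enorm (x - p))%R -> F t x = (Fr t x)%:E.
Proof.
move=> D0; rewrite /F /f_fun SNRs /SNR gt_eqF //= -/c.
have q0 : (0 < qq x)%R by rewrite /qq powR_gt0.
rewrite powa ?ltW // -/(qq x) -!EFinM -!EFinD /Fr.
congr (_ + _ + _)%:E; rewrite /g.
have -> : (a * (c / qq x ^+ 2) = (a * c) * (qq x)^-1 ^+ 2)%R by rewrite exprVn mulrA.
rewrite sqrtrM; last by rewrite mulr_ge0 // ltW // ?a_gt0 ?c_gt0.
by rewrite sqrtr_sqr ger0_norm ?mulrA // invr_ge0 ltW.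
Qed.

Definition PP (L t q : R) : R :=
  ((L - a) * q ^+ 2 - 2 * (Num.sqrt t * g) * q - c)%R.

Lemma Fr_equiv L t x : (0 < enorm (x - p))%R ->
  (L <= Fr t x)%R = (PP L t (qq x) <= 0)%R.
Proof.
move=> D0; have q0 : (0 < qq x)%R by rewrite /qq powR_gt0.
have EQ : ((Fr t x - L) * qq x ^+ 2 = - PP L t (qq x))%R.
  by rewrite /Fr /PP; field; rewrite gt_eqF.
have q2 : (0 < qq x ^+ 2)%R by rewrite exprn_gt0.
apply/idP/idP => h.
  have : (0 <= (Fr t x - L) * qq x ^+ 2)%R by rewrite mulr_ge0 ?subr_ge0 // ltW.
  rewrite EQ; lra.
have : (0 <= (Fr t x - L) * qq x ^+ 2)%R by rewrite EQ; lra.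
by rewrite pmulr_lge0 // subr_ge0.
Qed.

Lemma keyP L t x : L%:E <= F t x -> (PP L t (qq x) <= 0)%R.
Proof.
have [D0|D0] := eqVneq (enorm (x - p)) 0%R.
  move=> _; rewrite /PP /qq D0 powR0; last by rewrite /e gt_eqF // divr_gt0 //; move: al2; lra.
  have := c_gt0; rewrite expr0n /= !mulr0 !subr0; lra.
have D0' : (0 < enorm (x - p))%R by rewrite lt_neqAle eq_sym D0 enorm_ge0.
by rewrite F_fin // lee_fin Fr_equiv.
Qed.

Lemma keyC L t x : (0 < enorm (x - p))%R -> (PP L t (qq x) <= 0)%R -> L%:E <= F t x.
Proof. by move=> D0 h; rewrite F_fin // lee_fin Fr_equiv. Qed.

Lemma qq_conv (x1 x2 : 'rV[R]_d) (l : R) : (0 <= l <= 1)%R ->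
  (qq (l *: x1 + (1 - l) *: x2) <= l * qq x1 + (1 - l) * qq x2)%R.
Proof.
move=> hl; have e1 : (1 <= e)%R by rewrite /e ler_pdivlMr //; move: al2; lra.
have l0 : (0 <= l)%R by case/andP: hl.
have l1 : (0 <= 1 - l)%R by case/andP: hl => _; rewrite subr_ge0.
have PC := @powconv R _ _ _ _ e1 (@enorm_ge0 R d (x1 - p)%R) (@enorm_ge0 R d (x2 - p)%R) hl.
apply: le_trans PC.
apply: ge0_ler_powR; first (move: e1; lra).
- by rewrite nnegrE enorm_ge0.
- by rewrite nnegrE addr_ge0 // mulr_ge0 // enorm_ge0.
exact: enorm_conv.
Qed.

Lemma joint : quasiconcave_joint F.
Proof.
move=> t1 t2 x1 x2 l /andP[t10 _] /andP[t20 _] hl.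
set x := (l *: x1 + (1 - l) *: x2)%R.
have [D0|D0] := eqVneq (enorm (x - p)) 0%R; first by rewrite (F_inf _ _ D0) leey.
have D0' : (0 < enorm (x - p))%R by rewrite lt_neqAle eq_sym D0 enorm_ge0.
have H : forall L, L%:E <= Order.min (F t1 x1) (F t2 x2) ->
    L%:E <= F (l * t1 + (1 - l) * t2)%R x.
  move=> L; rewrite le_min => /andP[h1 h2].
  apply: keyC => //; rewrite /PP.
  apply: (@core R _ _ _ _ _ _ (qq x1) (qq x2)).
  - exact: c_gt0.
  - exact: sqrtr_ge0.
  - exact: t10.
  - exact: t20.
  - exact: hl.
  - exact: powR_ge0.
  - exact: powR_ge0.
  - exact: powR_ge0.
  - exact: qq_conv.
  - exact: keyP h1.
  - exact: keyP h2.
rewrite (F_fin _ _ D0') in H *.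
move: H; case: (Order.min _ _) => [r| |] H.
- exact: H.
- have := H (Fr (l * t1 + (1 - l) * t2) x + 1)%R (leey _).
  rewrite lee_fin => hh; exfalso; move: hh; lra.
- exact: leNye.
Qed.
End Fpart.

Section Gpart.
Variable R : realType.
Variable d : nat.
Local Open Scope ereal_scope.

Lemma snr_anti (xi P alpha : R) (s x y : 'rV[R]_d) :
  (0 < xi * P)%R -> (0 <= alpha)%R -> (enorm (s - x) <= enorm (s - y))%R ->
  SNR xi P alpha s y <= SNR xi P alpha s x.
Proof.
move=> c0 a0 hle; rewrite /SNR.
have [Dx|Dx] := eqVneq (enorm (s - x)) 0%R; first by rewrite leey.
have Dx' : (0 < enorm (s - x))%R by rewrite lt_neqAle eq_sym Dx enorm_ge0.
have Dy' : (0 < enorm (s - y))%R by apply: lt_le_trans hle.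
rewrite (gt_eqF Dy') lee_fin; apply: ler_wpM2l; first exact: ltW.
rewrite lef_pV2 ?posrE ?powR_gt0 //.
by apply: ge0_ler_powR => //; rewrite nnegrE ltW.
Qed.

Lemma gpart (xs xsr Ps alpha : R) (s p : 'rV[R]_d) (rho : R) :
  (0 < xsr)%R -> (0 < Ps)%R -> (0 <= alpha)%R -> (0 <= rho <= 1)%R ->
  quasiconcave_rV (g_fun xs xsr Ps alpha s p rho).
Proof.
move=> x0 P0 a0 /andP[r0 r1] x1 x2 l hl; rewrite /g_fun.
have k0 : 0 <= (1 - rho ^+ 2)%:E.
  have : (rho * rho <= 1 * 1)%R by apply: ler_pM.
  by rewrite lee_fin expr2 mul1r subr_ge0.
have c0 : (0 < xsr * Ps)%R by rewrite mulr_gt0.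
have hD := @enorm_conv' R d x1 x2 s l hl.
have l0 : (0 <= l)%R by case/andP: hl.
have l1 : (0 <= 1 - l)%R by case/andP: hl => _; rewrite subr_ge0.
have [h12|h12] := lerP (enorm (s - x1)) (enorm (s - x2)).
  rewrite ge_min; apply/orP; right.
  apply: (lee_wpmul2l k0); apply: leeD2l; apply: snr_anti => //.
  apply: le_trans hD _.
  have := ler_wpM2l l0 h12; lra.
rewrite ge_min; apply/orP; left.
apply: (lee_wpmul2l k0); apply: leeD2l; apply: snr_anti => //.
apply: le_trans hD _.
have := ler_wpM2l l1 (ltW h12); lra.
Qed.
End Gpart.

Theorem lemma3 (R : realType) (d N : nat) (alpha Ps Pr xi_sr : R)
    (xi_sj xi_rj : 'I_N -> R) (s : 'rV[R]_d) (pos : 'I_N -> 'rV[R]_d) :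
  (0 < d)%N -> (0 < N)%N -> 2 <= alpha -> 0 < Ps -> 0 < Pr -> 0 < xi_sr ->
  (forall j, 0 < xi_sj j) -> (forall j, 0 < xi_rj j) ->
  (forall j, s != pos j) ->
  forall j : 'I_N,
    (forall rho : R, 0 <= rho <= 1 ->
       quasiconcave_rV (f_fun (xi_sj j) (xi_rj j) Ps Pr alpha s (pos j) rho)
       /\ quasiconcave_rV (g_fun (xi_sj j) xi_sr Ps alpha s (pos j) rho))
    /\ quasiconcave_joint
         (fun t r => f_fun (xi_sj j) (xi_rj j) Ps Pr alpha s (pos j) (Num.sqrt t) r).
Proof.
move=> _ _ al2 Ps0 Pr0 xsr0 xs0 xr0 sp j.
have J : quasiconcave_joint
         (fun t r => f_fun (xi_sj j) (xi_rj j) Ps Pr alpha s (pos j) (Num.sqrt t) r).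
  exact (@joint R d _ _ _ _ _ _ _ (xs0 j) (xr0 j) Ps0 Pr0 al2 (sp j)).
split=> // rho /andP[r0 r1]; split; last first.
  apply: gpart => //; [lra | exact/andP].
move=> x1 x2 l hl.
have t0 : 0 <= rho ^+ 2 <= 1.
  have : rho * rho <= 1 * 1 by apply: ler_pM.
  by rewrite expr2 mul1r mulr_ge0.
have := J _ _ x1 x2 l t0 t0 hl.
have -> : l * rho ^+ 2 + (1 - l) * rho ^+ 2 = rho ^+ 2 by ring.
by rewrite sqrtr_sqr ger0_norm.
Qed.
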